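(* For a bounded distributive lattice $L$ the following are equivalent: (1) $L$ is isomorphic to $\Phi(K)$ for some bounded distributive lattice $K$; (2) the Priestley space $\mathcal{X}(L)$ is order-homeomorphic to $Y\times\underline{2}$ for some Priestley space $Y$.
   Context: All lattices are bounded distributive with $0\neq 1$. For a lattice $K$, $\Phi(K)=\{(a,b)\in K\times K: a\le b\}$ with coordinatewise order, a $(0,1)$-sublattice of $K\times K$. A Priestley space is a poset with a compact topology such that whenever $x\not\ge y$ there is a clopen down-set containing $x$ but not $y$. $\mathcal{X}(L)$ is the Priestley space of prime ideals of $L$ ordered by inclusion, with topology generated by the sets $X_a=\{I: a\notin I\}$ and their complements, $a\in L$. $\underline{2}$ is the two-element chain $\{0<1\}$ with the discrete topology; products carry the product topology and coordinatewise order. Order-homeomorphic means there is a homeomorphism that is an order-isomorphism. *)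

(* Defs.v *)
From HB Require Import structures.
From Stdlib Require List.
From mathcomp Require Import all_boot all_order.
Set Implicit Arguments. Unset Strict Implicit. Unset Printing Implicit Defensive.
Import Order.Theory.
Local Open Scope order_scope.

(* f : L -> K * K is a (0,1)-lattice isomorphism of L onto
   Phi(K) = {(a,b) | a <= b} with coordinatewise operations. *)
Definition iso_onto_Phi {d d' : Order.disp_t}
  (L : tbDistrLatticeType d) (K : tbDistrLatticeType d') (f : L -> K * K) : Prop :=
  injective f /\
  (forall x : L, (f x).1 <= (f x).2) /\
  (forall a b : K, a <= b -> exists x : L, f x = (a, b)) /\
  (forall x y : L, f (x `&` y) = ((f x).1 `&` (f y).1, (f x).2 `&` (f y).2)) /\
  (forall x y : L, f (x `|` y) = ((f x).1 `|` (f y).1, (f x).2 `|` (f y).2)) /\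
  f \bot = (\bot, \bot) /\
  f \top = (\top, \top).

Definition isomorphic_to_some_Phi {d : Order.disp_t} (L : tbDistrLatticeType d) : Prop :=
  exists (d' : Order.disp_t) (K : tbDistrLatticeType d'),
    (\bot != \top :> K) /\ exists f : L -> K * K, iso_onto_Phi f.

Definition is_topology (X : Type) (opn : (X -> Prop) -> Prop) : Prop :=
  [/\ (forall U V, opn U -> (forall x, U x <-> V x) -> opn V),
      opn (fun _ => True),
      (forall U V, opn U -> opn V -> opn (fun x => U x /\ V x)) &
      (forall F : (X -> Prop) -> Prop, (forall U, F U -> opn U) ->
         opn (fun x => exists U, F U /\ U x))].

Inductive generated (X : Type) (S : (X -> Prop) -> Prop) : (X -> Prop) -> Prop :=
  | gen_sub : forall U, S U -> generated S U
  | gen_full : generated S (fun _ => True)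
  | gen_inter : forall U V, generated S U -> generated S V ->
                generated S (fun x => U x /\ V x)
  | gen_union : forall F : (X -> Prop) -> Prop, (forall U, F U -> generated S U) ->
                generated S (fun x => exists U, F U /\ U x)
  | gen_ext : forall U V, generated S U -> (forall x, U x <-> V x) -> generated S V.

Definition compact (X : Type) (opn : (X -> Prop) -> Prop) : Prop :=
  forall F : (X -> Prop) -> Prop, (forall U, F U -> opn U) ->
    (forall x, exists U, F U /\ U x) ->
    exists s : seq (X -> Prop), (forall U, List.In U s -> F U) /\
                                (forall x, exists U, List.In U s /\ U x).

Definition is_partial_order (X : Type) (le : X -> X -> Prop) : Prop :=
  [/\ (forall x, le x x), (forall x y, le x y -> le y x -> x = y) &
      (forall x y z, le x y -> le y z -> le x z)].

Definition clopen (X : Type) (opn : (X -> Prop) -> Prop) (U : X -> Prop) : Prop :=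
  opn U /\ opn (fun x => ~ U x).

Definition down_set (X : Type) (le : X -> X -> Prop) (U : X -> Prop) : Prop :=
  forall x y, le y x -> U x -> U y.

Definition priestley_separation (X : Type) (le : X -> X -> Prop)
  (opn : (X -> Prop) -> Prop) : Prop :=
  forall x y, ~ le y x ->
    exists U, clopen opn U /\ down_set le U /\ U x /\ ~ U y.

Record PriestleySpace := {
  ps_car :> Type;
  ps_le : ps_car -> ps_car -> Prop;
  ps_open : (ps_car -> Prop) -> Prop;
  ps_order : is_partial_order ps_le;
  ps_top : is_topology ps_open;
  ps_compact : compact ps_open;
  ps_sep : priestley_separation ps_le ps_open }.

Definition order_homeomorphic (X : Type) (leX : X -> X -> Prop) (opX : (X -> Prop) -> Prop)
  (Z : Type) (leZ : Z -> Z -> Prop) (opZ : (Z -> Prop) -> Prop) : Prop :=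
  exists (f : X -> Z) (g : Z -> X),
    [/\ cancel f g, cancel g f,
        (forall x y, leX x y <-> leZ (f x) (f y)),
        (forall U, opZ U -> opX (fun x => U (f x))) &
        (forall U, opX U -> opZ (fun z => U (g z)))].

Definition prime_ideal {d : Order.disp_t} (L : tbDistrLatticeType d) (I : L -> Prop) : Prop :=
  [/\ I \bot,
      (forall a b, a <= b -> I b -> I a),
      (forall a b, I a -> I b -> I (a `|` b)),
      ~ I \top &
      (forall a b, I (a `&` b) -> I a \/ I b)].

Definition XL {d : Order.disp_t} (L : tbDistrLatticeType d) : Type :=
  {I : L -> Prop | prime_ideal I}.

Definition XL_le {d : Order.disp_t} (L : tbDistrLatticeType d) (I J : XL L) : Prop :=
  forall a, proj1_sig I a -> proj1_sig J a.

Definition XL_open {d : Order.disp_t} (L : tbDistrLatticeType d) : (XL L -> Prop) -> Prop :=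
  generated (fun U => exists a : L,
     U = (fun I : XL L => ~ proj1_sig I a) \/ U = (fun I : XL L => proj1_sig I a)).

(* 2 = {false < true}, discrete; product order and product topology *)
Definition prod2_le (Y : PriestleySpace) (p q : Y * bool) : Prop :=
  ps_le p.1 q.1 /\ (p.2 ==> q.2).

Definition prod2_open (Y : PriestleySpace) : (Y * bool -> Prop) -> Prop :=
  generated (fun W =>
    (exists U, ps_open U /\ W = (fun p : Y * bool => U p.1)) \/
    (exists V : bool -> Prop, W = (fun p : Y * bool => V p.2))).

(* Main.v *)
From HB Require Import structures.
Require Import Defs.
From mathcomp Require Import all_boot all_order.
From Stdlib Require Import Classical ClassicalEpsilon FunctionalExtensionality PropExtensionality ProofIrrelevance.
From Stdlib Require List.
Set Implicit Arguments. Unset Strict Implicit. Unset Printing Implicit Defensive.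
Import Order.Theory.
Local Open Scope order_scope.

Lemma pred_ext (A : Type) (X Y : A -> Prop) : (forall a, X a <-> Y a) -> X = Y.
Proof. move=> H; apply: functional_extensionality => a; apply: propositional_extensionality; exact: H. Qed.

Lemma generated_top (X : Type) (S : (X -> Prop) -> Prop) : is_topology (generated S).
Proof.
split.
- move=> U V HU HUV; exact: gen_ext HU HUV.
- exact: gen_full.
- move=> U V; exact: gen_inter.
- move=> F HF; exact: gen_union HF.
Qed.

Lemma top_empty (X : Type) (op : (X -> Prop) -> Prop) : is_topology op -> op (fun _ => False).
Proof.
rewrite /is_topology; case=> Hext _ _ Hun.
apply: (Hext _ _ (Hun (fun _ => False) (fun U (H : False) => match H with end))).
by move=> x; split=> [[U [[]]]|[]].
Qed.

Lemma top_union2 (X : Type) (op : (X -> Prop) -> Prop) U V : is_topology op -> op U -> op V ->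
  op (fun x => U x \/ V x).
Proof.
rewrite /is_topology; case=> Hext _ _ Hun HU HV.
apply: (Hext _ _ (Hun (fun W => W = U \/ W = V) _)); last first.
- move=> x; split=> [[W [[->|->] Hx]]|[Hx|Hx]]; [by left|by right| |].
  + by exists U; split; [left|].
  + by exists V; split; [right|].
- by move=> W [->|->].
Qed.

Lemma top_inter (X : Type) (op : (X -> Prop) -> Prop) U V : is_topology op -> op U -> op V ->
  op (fun x => U x /\ V x).
Proof. by rewrite /is_topology; case=> _ _ H _; apply: H. Qed.

Lemma top_ext (X : Type) (op : (X -> Prop) -> Prop) U V : is_topology op -> op U ->
  (forall x, U x <-> V x) -> op V.
Proof. by rewrite /is_topology; case=> H _ _ _; apply: H. Qed.

Lemma top_full (X : Type) (op : (X -> Prop) -> Prop) : is_topology op -> op (fun _ => True).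
Proof. by rewrite /is_topology; case. Qed.

Lemma gen_preimage (X Z : Type) (S : (Z -> Prop) -> Prop) (op : (X -> Prop) -> Prop) (h : X -> Z) :
  is_topology op -> (forall V, S V -> op (fun x => V (h x))) ->
  forall U, generated S U -> op (fun x => U (h x)).
Proof.
move=> Hop HS U; elim=> {U}.
- by move=> U HU; apply: HS.
- exact: top_full.
- by move=> U V _ HU _ HV; apply: top_inter.
- move=> F _ HF.
  move: Hop; rewrite /is_topology; case=> Hext _ _ Hun.
  apply: (Hext _ _ (Hun (fun W => exists U, F U /\ W = (fun x => U (h x))) _)); last first.
  + move=> x; split.
    * by move=> [W [[U [FU ->]] Hx]]; exists U.
    * by move=> [U [FU Hx]]; exists (fun x => U (h x)); split=> //; exists U.
  + by move=> W [U [FU ->]]; apply: HF.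
- move=> U V _ HU HUV; apply: top_ext HU _ => //; by move=> x; apply: HUV.
Qed.

Definition sub (A : Type) (X Y : A -> Prop) := forall a, X a -> Y a.

Lemma sub_anti (A : Type) (X Y : A -> Prop) : sub X Y -> sub Y X -> X = Y.
Proof. by move=> H1 H2; apply: pred_ext => a; split; [apply: H1|apply: H2]. Qed.

Definition supX (A : Type) (X0 : A -> Prop) (C : (A -> Prop) -> Prop) : A -> Prop :=
  fun a => X0 a \/ exists X, C X /\ X a.

Inductive tower (A : Type) (succ : (A -> Prop) -> (A -> Prop)) (X0 : A -> Prop) : (A -> Prop) -> Prop :=
  | tw_succ X : tower succ X0 X -> tower succ X0 (succ X)
  | tw_sup (C : (A -> Prop) -> Prop) : (forall X, C X -> tower succ X0 X) -> tower succ X0 (supX X0 C).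

Section Zorn.
Variable A : Type.
Local Notation set := (A -> Prop).
Variable G : set -> Prop.
Hypothesis chainH : forall C : set -> Prop, (forall X, C X -> G X) ->
  (forall X Y, C X -> C Y -> sub X Y \/ sub Y X) -> (exists X, C X) ->
  G (fun a => exists X, C X /\ X a).

Theorem zorn X0 : G X0 -> exists M, G M /\ sub X0 M /\ forall N, G N -> sub M N -> sub N M.
Proof.
move=> GX0; apply: NNPP => Hno.
have H : forall M, G M -> sub X0 M -> exists N, G N /\ sub M N /\ ~ sub N M.
  move=> M GM XM; apply: NNPP => HN; apply: Hno; exists M; split=> //; split=> // N GN MN.
  by apply: NNPP => NM; apply: HN; exists N.
pose P M N := sub M N /\ (G M -> sub X0 M -> G N /\ ~ sub N M).
have Pex : forall M, exists N, P M N.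
  move=> M; case: (classic (G M /\ sub X0 M)) => [[GM XM]|HM].
  - by case: (H M GM XM) => N [GN [MN NM]]; exists N; split.
  - by exists M; split=> // GM XM; case: HM.
pose succ M := epsilon (inhabits M) (P M).
have succP : forall M, P M (succ M) by move=> M; apply: epsilon_spec.
have succ_inf : forall M, sub M (succ M) by move=> M; case: (succP M).
pose T := tower succ X0.
have tw_X0 : forall X, T X -> sub X0 X.
  move=> X; elim=> {X}.
  - by move=> X _ HX a /HX; apply: succ_inf.
  - by move=> C _ _ a Ha; left.
pose psub (X Y : set) := sub X Y /\ ~ sub Y X.
pose extreme c := forall x, T x -> psub x c -> sub (succ x) c.
have lem1 : forall c, T c -> extreme c -> forall x, T x -> sub x c \/ sub (succ c) x.
  move=> c Tc Ec x; elim=> {x}.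
  - move=> x Tx [xc|cx].
    + case: (classic (sub c x)) => cx.
      * by right; rewrite (sub_anti xc cx) => a.
      * by left; apply: Ec.
    + by right=> a /cx; apply: succ_inf.
  - move=> C TC IH.
    case: (classic (exists X, C X /\ sub (succ c) X)) => [[X [CX HX]]|Hn].
    + by right=> a /HX Ha; right; exists X.
    + left=> a; rewrite /supX => -[Ha|[X [CX Xa]]]; first exact: (tw_X0 c Tc a Ha).
      case: (IH X CX) => [HX|HX]; first exact: HX a Xa.
      by case: Hn; exists X.
have lem2 : forall c, T c -> extreme c.
  move=> c; elim=> {c}.
  - move=> c Tc Ec x Tx [xs nsx].
    case: (lem1 c Tc Ec x Tx) => [xc|scx]; last by case: nsx.
    case: (classic (sub c x)) => cx.
    + by rewrite (sub_anti xc cx) => a.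
    + by move=> a /(Ec x Tx (conj xc cx)); apply: succ_inf.
  - move=> C TC IH x Tx [xs nsx].
    case: (classic (exists X, C X /\ ~ sub (succ X) x)) => [[X [CX HX]]|Hn].
    + case: (lem1 X (TC X CX) (IH X CX) x Tx) => [xX|//].
      case: (classic (sub X x)) => Xx.
      * have -> : x = X by apply: sub_anti.
        case: (lem1 X (TC X CX) (IH X CX) _ (tw_sup TC)) => [sX|//].
        case: nsx => a /sX Ha; rewrite (sub_anti xX Xx); exact Ha.
      * move=> a /(IH X CX x Tx (conj xX Xx)) Ha; right; by exists X.
    + case: nsx => a; rewrite /supX => -[Ha|[X [CX Xa]]]; first exact: (tw_X0 x Tx a Ha).
      apply: (NNPP _ (fun nS => Hn (ex_intro _ X (conj CX nS)))); exact: succ_inf.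
have chainT : forall x y, T x -> T y -> sub x y \/ sub y x.
  move=> x y Tx Ty; case: (lem1 y Ty (lem2 y Ty) x Tx) => [|H1]; first by left.
  by right=> a /succ_inf /H1.
have GT : forall X, T X -> G X.
  move=> X; elim=> {X}.
  - move=> X TX GX; by case: (succP X) => _ /(_ GX (tw_X0 X TX)) [].
  - move=> C TC GC.
    have -> : supX X0 C = (fun a => exists X, (X = X0 \/ C X) /\ X a).
      apply: pred_ext => a; split.
      + by move=> [Ha|[X [CX Xa]]]; [exists X0; split; [left|]|exists X; split; [right|]].
      + by move=> [X [[->|CX] Xa]]; [left|right; exists X].
    apply: chainH.
    + by move=> X [->|CX]; [|apply: GC].
    + move=> X Y [->|CX] [->|CY].
      * by left.
      * by left; apply: tw_X0; apply: TC.
      * by right; apply: tw_X0; apply: TC.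
      * by apply: chainT; apply: TC.
    + by exists X0; left.
pose s := supX X0 T.
have Ts : T s by apply: tw_sup.
have Tss : T (succ s) by apply: tw_succ.
case: (succP s) => _ /(_ (GT s Ts) (tw_X0 s Ts)) [_]; apply.
by move=> a Ha; right; exists (succ s).
Qed.
End Zorn.
Section Lat.
Context {d : Order.disp_t} (L : tbDistrLatticeType d).
Implicit Types (a b x y : L).

Definition ideal (I : L -> Prop) := [/\ I \bot, (forall a b, a <= b -> I b -> I a) &
   (forall a b, I a -> I b -> I (a `|` b))].
Definition lfilter (F : L -> Prop) := [/\ F \top, (forall a b, a <= b -> F a -> F b) &
   (forall a b, F a -> F b -> F (a `&` b))].

Lemma XL_ext (P Q : XL L) : (forall a, proj1_sig P a <-> proj1_sig Q a) -> P = Q.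
Proof.
case: P => p hp; case: Q => q hq /= H.
have E : p = q by apply: pred_ext.
subst q; congr exist; exact: proof_irrelevance.
Qed.

Section PI.
Variable P : XL L.
Local Notation p := (proj1_sig P).
Lemma pi_bot : p \bot. Proof. by case: (proj2_sig P). Qed.
Lemma pi_down a b : a <= b -> p b -> p a. Proof. by case: (proj2_sig P) => _ H _ _ _; apply: H. Qed.
Lemma pi_top : ~ p \top. Proof. by case: (proj2_sig P). Qed.
Lemma pi_join a b : p (a `|` b) <-> p a /\ p b.
Proof.
split.
- by move=> H; split; apply: pi_down H; rewrite ?leUl ?leUr.
- by case: (proj2_sig P) => _ _ H _ _ [? ?]; apply: H.
Qed.
Lemma pi_meet a b : p (a `&` b) <-> p a \/ p b.
Proof.
split.
- by case: (proj2_sig P) => _ _ _ _; apply.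
- by case=> H; apply: pi_down H; rewrite ?leIl ?leIr.
Qed.
End PI.

Lemma XL_le_refl (P : XL L) : XL_le P P. Proof. by []. Qed.

Theorem pit I F : ideal I -> lfilter F -> (forall x, I x -> F x -> False) ->
  exists P : XL L, (forall x, I x -> proj1_sig P x) /\ (forall x, proj1_sig P x -> ~ F x).
Proof.
move=> HI HF disj.
pose G J := [/\ ideal J, sub I J & forall x, J x -> F x -> False].
have HZ : exists M, G M /\ sub I M /\ forall N, G N -> sub M N -> sub N M.
  apply: (@zorn L G); last by split=> //.
  move=> C HC Hch [X0 CX0]; split.
  - split.
    + by exists X0; split=> //; case: (HC X0 CX0) => [[]].
    + move=> a b ab [X [CX Xb]]; exists X; split=> //.
      by case: (HC X CX) => [[_ H _]] _ _; apply: H Xb.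
    + move=> a b [X [CX Xa]] [Y [CY Yb]].
      case: (Hch X Y CX CY) => [XY|YX].
      * exists Y; split=> //; case: (HC Y CY) => [[_ _ H]] _ _; apply: H => //; exact: XY.
      * exists X; split=> //; case: (HC X CX) => [[_ _ H]] _ _; apply: H => //; exact: YX.
  - by move=> a Ia; exists X0; split=> //; case: (HC X0 CX0) => _ H _; apply: H.
  - by move=> x [X [CX Xx]]; case: (HC X CX) => _ _ H; apply: H.
have [M [GM [_ Mmax]]] := HZ.
have [HM IM dM] := GM.
have [M0 Md Mj] := HM.
case: HF => Ftop Fup Fmeet.
have gen : forall a, ~ M a -> exists m, M m /\ F (m `|` a).
  move=> a Ma; apply: NNPP => Hn.
  pose N x := exists m, M m /\ x <= m `|` a.
  have GN : G N.
    split.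
    - split.
      + by exists \bot; split=> //; rewrite le0x.
      + by move=> x y xy [m [Mm ym]]; exists m; split=> //; exact: le_trans xy ym.
      + move=> x y [m [Mm xm]] [m' [Mm' ym']]; exists (m `|` m'); split; first exact: Mj.
        rewrite leUx; apply/andP; split.
        * exact: le_trans xm (leU2 (leUl _ _) (lexx _)).
        * exact: le_trans ym' (leU2 (leUr _ _) (lexx _)).
    - by move=> x Ix; exists x; split; [exact: IM|rewrite leUl].
    - move=> x [m [Mm xm]] Fx; apply: Hn; exists m; split=> //; exact: Fup Fx.
  have MN : sub M N by move=> x Mx; exists x; split=> //; rewrite leUl.
  by apply: Ma; apply: (Mmax N GN MN); exists \bot; split=> //; rewrite leUr.
have Mpr : prime_ideal M.
  split=> //.
  - by move=> Mt; exact: dM Mt Ftop.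
  - move=> a b Mab; apply: NNPP => Hn.
    have [m1 [M1 F1]] := gen a (fun H => Hn (or_introl H)).
    have [m2 [M2 F2]] := gen b (fun H => Hn (or_intror H)).
    apply: (dM ((m1 `|` m2) `|` (a `&` b))); first by apply: (Mj) => //; apply: (Mj).
    apply: Fup (Fmeet _ _ F1 F2).
    rewrite joinIr lexI; apply/andP; split.
    + by apply: leIxl; apply: leU2 => //; rewrite leUl.
    + by apply: leIxr; apply: leU2 => //; rewrite leUr.
by exists (exist _ M Mpr); split.
Qed.
End Lat.
Definition isb (P : Prop) : bool := if excluded_middle_informative P then true else false.
Lemma isbP (P : Prop) : isb P <-> P.
Proof. by rewrite /isb; case: excluded_middle_informative. Qed.

Section Top.
Context {d : Order.disp_t} (L : tbDistrLatticeType d).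
Local Notation pr P := (proj1_sig P).

Definition bas (a b : L) (P : XL L) := ~ pr P a /\ pr P b.

Lemma XL_basis U : XL_open U -> forall P, U P -> exists a b, bas a b P /\ forall Q, bas a b Q -> U Q.
Proof.
rewrite /XL_open; elim=> {U}.
- move=> U [a [->|->]] P HP.
  + exists a, \bot; split; first by split=> //; apply: pi_bot.
    by move=> Q [].
  + exists \top, a; split; first by split=> //; apply: pi_top.
    by move=> Q [].
- move=> P _; exists \top, \bot; split=> //; split; [apply: pi_top|apply: pi_bot].
- move=> U V _ HU _ HV P [UP VP].
  have [a1 [b1 [[h1 h1'] H1]]] := HU P UP.
  have [a2 [b2 [[h2 h2'] H2]]] := HV P VP.
  exists (a1 `&` a2), (b1 `|` b2); split.
  + split; [by rewrite pi_meet; case|by rewrite pi_join].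
  + move=> Q [q1 q2]; move: q2; rewrite pi_join => -[q2 q2'].
    split; [apply: H1|apply: H2]; split=> //; move=> H; apply: q1; rewrite pi_meet; by [left|right].
- move=> F _ IH P [U [FU UP]].
  have [a [b [H1 H2]]] := IH U FU P UP.
  by exists a, b; split=> // Q /H2 HQ; exists U.
- move=> U V _ IH HUV P /HUV /IH [a [b [H1 H2]]].
  by exists a, b; split=> // Q /H2 /HUV.
Qed.

Lemma bas_open a b : XL_open (bas a b).
Proof.
apply: (@gen_inter _ _ (fun P : XL L => ~ pr P a) (fun P : XL L => pr P b)).
- by apply: gen_sub; exists a; left.
- by apply: gen_sub; exists b; right.
Qed.

Definition jn (s : seq L) := foldr (fun x y => x `|` y) \bot s.
Definition mt (s : seq L) := foldr (fun x y => x `&` y) \top s.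

Lemma jn_mem (s : seq L) a : a \in s -> a <= jn s.
Proof.
elim: s => //= x s IH; rewrite in_cons => /orP [/eqP->|/IH H]; first by rewrite leUl.
exact: le_trans H (leUr _ _).
Qed.
Lemma mt_mem (s : seq L) a : a \in s -> mt s <= a.
Proof.
elim: s => //= x s IH; rewrite in_cons => /orP [/eqP->|/IH H]; first by rewrite leIl.
exact: le_trans (leIr _ _) H.
Qed.
Lemma jn_cat s t : jn (s ++ t) = jn s `|` jn t.
Proof. by elim: s => /= [|x s ->]; rewrite ?join0x ?joinA. Qed.
Lemma mt_cat s t : mt (s ++ t) = mt s `&` mt t.
Proof. by elim: s => /= [|x s ->]; rewrite ?meet1x ?meetA. Qed.
Lemma jn_pi (P : XL L) s : ~ pr P (jn s) -> exists2 a, a \in s & ~ pr P a.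
Proof.
elim: s => /= [|x s IH]; first by move=> H; case: H; apply: pi_bot.
rewrite pi_join => H; case: (classic (pr P x)) => Hx.
- have [a Ha Hpa] : exists2 a, a \in s & ~ pr P a by apply: IH => Hs; apply: H.
  by exists a; rewrite // in_cons Ha orbT.
- by exists x; rewrite // in_cons eqxx.
Qed.
Lemma mt_pi (P : XL L) s : pr P (mt s) -> exists2 b, b \in s & pr P b.
Proof.
elim: s => /= [|x s IH]; first by move=> H; case: (pi_top H).
rewrite pi_meet => -[Hx|/IH [b Hb Pb]].
- by exists x; rewrite // in_cons eqxx.
- by exists b; rewrite // in_cons Hb orbT.
Qed.

Lemma subbasic_compact (A B : L -> Prop) :
  (forall P : XL L, (exists a, A a /\ ~ pr P a) \/ (exists b, B b /\ pr P b)) ->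
  exists sa sb : seq L, (forall a, a \in sa -> A a) /\ (forall b, b \in sb -> B b) /\
    forall P : XL L, (exists2 a, a \in sa & ~ pr P a) \/ (exists2 b, b \in sb & pr P b).
Proof.
move=> Hcov.
pose I x := exists sa, (forall a, a \in sa -> A a) /\ x <= jn sa.
pose F y := exists sb, (forall b, b \in sb -> B b) /\ mt sb <= y.
case: (classic (exists x, I x /\ F x)) => [[x [[sa [Asa xsa]] [sb [Bsb sbx]]]]|Hn].
  exists sa, sb; split=> //; split=> // P.
  case: (classic (pr P (jn sa))) => H.
  - right; apply: mt_pi; apply: pi_down H; exact: le_trans sbx xsa.
  - by left; apply: jn_pi.
have HI : ideal I.
  split.
  - by exists [::]; split=> //; rewrite le0x.
  - by move=> a b ab [s [Hs bs]]; exists s; split=> //; exact: le_trans ab bs.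
  - move=> a b [s [Hs ha]] [t [Ht hb]]; exists (s ++ t); split.
    + by move=> c; rewrite mem_cat => /orP [/Hs|/Ht].
    + by rewrite jn_cat; apply: leU2.
have HF : lfilter F.
  split.
  - by exists [::]; split=> //; rewrite lexx.
  - by move=> a b ab [s [Hs bs]]; exists s; split=> //; exact: le_trans bs ab.
  - move=> a b [s [Hs ha]] [t [Ht hb]]; exists (s ++ t); split.
    + by move=> c; rewrite mem_cat => /orP [/Hs|/Ht].
    + by rewrite mt_cat; apply: leI2.
have [P [IP PF]] := pit HI HF (fun x Ix Fx => Hn (ex_intro _ x (conj Ix Fx))).
case: (Hcov P) => [[a [Aa Pa]]|[b [Bb Pb]]].
- case: Pa; apply: IP; exists [:: a]; split; first by move=> c; rewrite inE => /eqP->.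
  by rewrite /= joinx0.
- case: (PF b Pb); exists [:: b]; split; first by move=> c; rewrite inE => /eqP->.
  by rewrite /= meetx1.
Qed.

Definition covers (s : seq (L * L)) := forall P : XL L, exists2 p, p \in s & bas p.1 p.2 P.

Lemma chain_fin (C : (L * L -> Prop) -> Prop) (s : seq (L * L)) :
  (forall X Y, C X -> C Y -> sub X Y \/ sub Y X) -> (exists X, C X) ->
  (forall p, p \in s -> exists X, C X /\ X p) -> exists X, C X /\ forall p, p \in s -> X p.
Proof.
move=> Hch [X0 CX0]; elim: s => [|q s IH] Hs; first by exists X0.
have [X [CX Xs]] := IH (fun p ps => Hs p ltac:(by rewrite in_cons ps orbT)).
have [Y [CY Yq]] := Hs q ltac:(by rewrite in_cons eqxx).
case: (Hch X Y CX CY) => [XY|YX].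
- exists Y; split=> // p; rewrite in_cons => /orP [/eqP->//|/Xs]; exact: XY.
- exists X; split=> // p; rewrite in_cons => /orP [/eqP->|/Xs//]; exact: YX.
Qed.

Lemma basic_compact (C : L * L -> Prop) :
  (forall P, exists p, C p /\ bas p.1 p.2 P) -> exists s, (forall p, p \in s -> C p) /\ covers s.
Proof.
move=> HC; apply: NNPP => Hn.
pose bad (S : L * L -> Prop) := ~ exists s, (forall p, p \in s -> S p) /\ covers s.
pose G S := sub C S /\ bad S.
have [M [GM [_ Mmax]]] : exists M, G M /\ sub C M /\ forall N, G N -> sub M N -> sub N M.
  apply: (@zorn (L * L) G); last by split.
  move=> Ch HCh Hch Hne; split.
  - move=> p Cp; case: Hne => X CX; exists X; split=> //; case: (HCh X CX) => H _; exact: H.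
  - move=> [s [Hs cs]].
    have [X [CX Xs]] := chain_fin Hch Hne Hs.
    by case: (HCh X CX) => _; apply; exists s.
have [CM bM] := GM.
have grow : forall q, ~ M q -> exists s, (forall p, p \in s -> M p \/ p = q) /\ covers s.
  move=> q Mq; apply: NNPP => H.
  have GN : G (fun p => M p \/ p = q).
    split; first by move=> p /CM; left.
    by move=> [s [Hs cs]]; apply: H; exists s.
  have := Mmax _ GN (fun p Mp => or_introl Mp) q (or_intror erefl).
  by [].
pose A a := M (a, \bot). pose B b := M (\top, b).
have Hsub : forall P : XL L, (exists a, A a /\ ~ pr P a) \/ (exists b, B b /\ pr P b).
  move=> P; have [[a b] [Cab [Pa Pb]]] := HC P.
  case: (classic (A a)) => Aa; first by left; exists a.
  case: (classic (B b)) => Bb; first by right; exists b.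
  have [s1 [H1 c1]] := grow _ Aa.
  have [s2 [H2 c2]] := grow _ Bb.
  case: (bM); exists ((a, b) :: filter (fun q : L * L => isb (M q)) (s1 ++ s2)); split.
  - move=> p; rewrite in_cons => /orP [/eqP->|]; first exact: CM.
    by rewrite mem_filter => /andP [/isbP].
  - move=> Q.
    have [q1 q1s bq1] := c1 Q. have [q2 q2s bq2] := c2 Q.
    case: (classic (M q1)) => Mq1.
      exists q1 => //; rewrite in_cons mem_filter mem_cat q1s /=.
      by apply/orP; right; apply/andP; split=> //; apply/isbP.
    case: (classic (M q2)) => Mq2.
      exists q2 => //; rewrite in_cons mem_filter mem_cat q2s orbT /=.
      by apply/orP; right; apply/andP; split=> //; apply/isbP.
    case: (H1 q1 q1s) => // E1; case: (H2 q2 q2s) => // E2.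
    exists (a, b); first by rewrite in_cons eqxx.
    move: bq1 bq2; rewrite E1 E2 /= => -[h1 _] [_ h2]; by split.
have [sa [sb [Hsa [Hsb Hcv]]]] := subbasic_compact Hsub.
case: (bM); exists ([seq (a, \bot) | a <- sa] ++ [seq (\top, b) | b <- sb]); split.
- move=> p; rewrite mem_cat => /orP [/mapP [a ain ->]|/mapP [b bin ->]].
  + exact: Hsa.
  + exact: Hsb.
- move=> P; case: (Hcv P) => [[a ain Pa]|[b bin Pb]].
  + exists (a, \bot); first by rewrite mem_cat map_f.
    by split=> //=; apply: pi_bot.
  + exists (\top, b); first by rewrite mem_cat map_f ?orbT.
    by split=> //=; apply: pi_top.
Qed.

Lemma XL_compact : compact (@XL_open d L).
Proof.
move=> F HF Hcov.
pose C (p : L * L) := exists U, F U /\ forall Q, bas p.1 p.2 Q -> U Q.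
have HC : forall P, exists p, C p /\ bas p.1 p.2 P.
  move=> P; have [U [FU UP]] := Hcov P.
  have [a [b [Hab HU]]] := XL_basis (HF U FU) UP.
  by exists (a, b); split=> //; exists U.
have [s [Cs cs]] := basic_compact HC.
suff [t [Ht Hcv]] : exists t : seq (XL L -> Prop), (forall U, List.In U t -> F U) /\
    forall P, (exists2 p, p \in s & bas p.1 p.2 P) -> exists U, List.In U t /\ U P.
  by exists t; split=> // P; apply: Hcv.
elim: s Cs {cs} => [|q s IH] Cs.
  by exists [::]; split=> // P [p].
have [t [Ht Hcv]] := IH (fun p ps => Cs p ltac:(by rewrite in_cons ps orbT)).
have [U [FU HU]] := Cs q ltac:(by rewrite in_cons eqxx).
exists (U :: t); split.
- by move=> V /= [<-|/Ht].
- move=> P [p]; rewrite in_cons => /orP [/eqP->|ps] bp.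
  + by exists U; split; [left|apply: HU].
  + have [V [Vt VP]] := Hcv P (ex_intro2 _ _ p ps bp).
    by exists V; split; [right|].
Qed.

Lemma XL_sep : priestley_separation (@XL_le d L) (@XL_open d L).
Proof.
move=> x y Hyx.
have [a [ya xa]] : exists a, pr y a /\ ~ pr x a.
  apply: NNPP => H; apply: Hyx => a ya; apply: NNPP => xa; apply: H; by exists a.
exists (fun P : XL L => ~ pr P a); split; [split|split; last by split=> // H; apply: H].
- by apply: gen_sub; exists a; left.
- apply: gen_ext (_ : XL_open (fun P : XL L => pr P a)) _.
  + by apply: gen_sub; exists a; right.
  + by move=> P; split=> [H H'|/NNPP].
- by move=> P Q QP HP HQ; apply: HP; apply: QP.
Qed.

Lemma XL_po : is_partial_order (@XL_le d L).
Proof.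
split.
- by move=> x a.
- by move=> x y H1 H2; apply: XL_ext => a; split; [apply: H1|apply: H2].
- by move=> x y z H1 H2 a /H1 /H2.
Qed.

Definition XLspace : PriestleySpace :=
  {| ps_car := XL L; ps_le := @XL_le d L; ps_open := @XL_open d L;
     ps_order := XL_po; ps_top := generated_top _; ps_compact := XL_compact; ps_sep := XL_sep |}.
End Top.
Lemma isb_true (P : Prop) : P -> isb P = true.
Proof. by move=> H; apply/isbP. Qed.
Lemma isb_false (P : Prop) : ~ P -> isb P = false.
Proof. by move=> H; apply/negbTE/negP => /isbP. Qed.

Lemma prod_fst_open (Y : PriestleySpace) (U : Y -> Prop) : ps_open U ->
  prod2_open (fun p : Y * bool => U p.1).
Proof. by move=> H; apply: gen_sub; left; exists U. Qed.
Lemma prod_snd_open (Y : PriestleySpace) (V : bool -> Prop) :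
  prod2_open (fun p : Y * bool => V p.2).
Proof. by apply: gen_sub; right; exists V. Qed.

Lemma prod_piece (Y : PriestleySpace) (U : Y -> Prop) (b : bool) : ps_open U ->
  prod2_open (fun p : Y * bool => U p.1 /\ p.2 = b).
Proof.
move=> H; apply: gen_inter; first by apply: gen_sub; left; exists U.
by apply: gen_sub; right; exists (fun c => c = b).
Qed.

Section Dir1.
Context {d d' : Order.disp_t} (L : tbDistrLatticeType d) (K : tbDistrLatticeType d')
  (f : L -> K * K) (Hf : iso_onto_Phi f).
Local Notation pr P := (proj1_sig P).

Let finj : injective f. Proof. by case: Hf. Qed.
Let fle x : (f x).1 <= (f x).2. Proof. by case: Hf => _ [H _]; apply: H. Qed.
Let fsurj a b : a <= b -> exists x, f x = (a, b). Proof. by case: Hf => _ [_ [H _]]; apply: H. Qed.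
Let fmeet x y : f (x `&` y) = ((f x).1 `&` (f y).1, (f x).2 `&` (f y).2).
Proof. by case: Hf => _ [_ [_ [H _]]]; apply: H. Qed.
Let fjoin x y : f (x `|` y) = ((f x).1 `|` (f y).1, (f x).2 `|` (f y).2).
Proof. by case: Hf => _ [_ [_ [_ [H _]]]]; apply: H. Qed.
Let fbot : f \bot = (\bot, \bot). Proof. by case: Hf => _ [_ [_ [_ [_ [H _]]]]]. Qed.
Let ftop : f \top = (\top, \top). Proof. by case: Hf => _ [_ [_ [_ [_ [_ H]]]]]. Qed.

Lemma f_mono x y : x <= y -> (f x).1 <= (f y).1 /\ (f x).2 <= (f y).2.
Proof.
move/meet_idPl => E; have := fmeet x y; rewrite E => E'.
by split; apply/meet_idPl; rewrite {2}E'.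
Qed.

Lemma f_le_inv x y : (f x).1 <= (f y).1 -> (f x).2 <= (f y).2 -> x <= y.
Proof.
move=> /meet_idPl h1 /meet_idPl h2; apply/meet_idPl; apply: finj.
by rewrite fmeet h1 h2; case: (f x).
Qed.

Definition crd (b : bool) (p : K * K) := if b then p.1 else p.2.

Lemma crd_meet b x y : crd b (f (x `&` y)) = crd b (f x) `&` crd b (f y).
Proof. by rewrite fmeet; case: b. Qed.
Lemma crd_join b x y : crd b (f (x `|` y)) = crd b (f x) `|` crd b (f y).
Proof. by rewrite fjoin; case: b. Qed.

Lemma psi_prime (Q : XL K) (b : bool) : prime_ideal (fun x => pr Q (crd b (f x))).
Proof.
split.
- by rewrite fbot; case: b; apply: pi_bot.
- move=> x y /f_mono [h1 h2]; apply: pi_down; by case: b.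
- by move=> x y h1 h2; rewrite crd_join pi_join.
- by rewrite ftop; case: b; apply: pi_top.
- by move=> x y; rewrite crd_meet pi_meet.
Qed.

Definition psi (p : XL K * bool) : XL L := exist _ _ (psi_prime p.1 p.2).

Definition phiQ (P : XL L) (a : K) := exists x, f x = (a, a) /\ pr P x.

Lemma phiQ_iff P a x : f x = (a, a) -> (phiQ P a <-> pr P x).
Proof.
move=> Hx; split; last by move=> H; exists x.
move=> [y [Hy Py]]; have E : y = x by apply: finj; rewrite Hx Hy.
by rewrite -E.
Qed.

Lemma phiQ_prime P : prime_ideal (phiQ P).
Proof.
split.
- by exists \bot; split=> //; apply: pi_bot.
- move=> a b ab [y [Hy Py]]; have [z Hz] := fsurj (lexx a); exists z; split=> //.
  by apply: pi_down Py; apply: f_le_inv; rewrite Hz Hy.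
- move=> a b [x [Hx Px]] [y [Hy Py]]; exists (x `|` y); split.
  + by rewrite fjoin Hx Hy.
  + by rewrite pi_join.
- move=> [x [Hx Px]]; have E : x = \top by apply: finj; rewrite Hx ftop.
  by subst x; apply: (pi_top Px).
- move=> a b [x [Hx Px]].
  have [za Ha] := fsurj (lexx a); have [zb Hb] := fsurj (lexx b).
  have E : x = za `&` zb by apply: finj; rewrite Hx fmeet Ha Hb.
  move: Px; rewrite E pi_meet => -[Pa|Pb]; [left; exists za|right; exists zb]; by split.
Qed.

Definition phiB (P : XL L) := isb (exists x, f x = (\bot, \top) /\ pr P x).

Lemma phiB_iff P e : f e = (\bot, \top) -> (phiB P <-> pr P e).
Proof.
move=> He; rewrite /phiB isbP; split; last by move=> H; exists e.
move=> [y [Hy Py]]; have E : y = e by apply: finj; rewrite He Hy.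
by rewrite -E.
Qed.

Definition phi (P : XL L) : XL K * bool := (exist _ _ (phiQ_prime P), phiB P).

Lemma psiK : cancel phi psi.
Proof.
move=> P; apply: XL_ext => x /=.
have [e He] := fsurj (le0x (\top : K)).
case: (classic (pr P e)) => Pe.
- have -> : phiB P = true by apply/(phiB_iff P He).
  rewrite /=; have [z Hz] := fsurj (lexx (f x).1).
  rewrite (phiQ_iff P Hz); split.
  + move=> Pz; have : pr P (z `|` e) by rewrite pi_join.
    apply: pi_down; apply: f_le_inv; rewrite fjoin Hz He /=; by rewrite ?joinx0 ?joinx1 ?lex1.
  + apply: pi_down; apply: f_le_inv; rewrite Hz //=; exact: fle.
- have -> : phiB P = false by apply/negbTE/negP => /(phiB_iff P He).
  rewrite /=; have [z Hz] := fsurj (lexx (f x).2).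
  rewrite (phiQ_iff P Hz); split.
  + apply: pi_down; apply: f_le_inv; rewrite Hz //=; exact: fle.
  + move=> Px; have : pr P (z `&` e).
      apply: pi_down Px; apply: f_le_inv; rewrite fmeet Hz He /=; by rewrite ?meetx0 ?le0x ?meetx1.
    move/pi_meet => -[Hz'|H]; [exact: Hz'|by case: Pe].
Qed.

Lemma phiK : cancel psi phi.
Proof.
move=> [Q b]; rewrite /phi; congr pair.
- apply: XL_ext => a /=; have [z Hz] := fsurj (lexx a).
  by rewrite (phiQ_iff _ Hz) /= Hz; case: b.
- have [e He] := fsurj (le0x (\top : K)).
  case: b.
  + by apply/(phiB_iff _ He); rewrite /= He /=; apply: pi_bot.
  + apply/negbTE/negP => /(phiB_iff _ He); rewrite /= He /=; exact: pi_top.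
Qed.

Lemma psi_le p q : XL_le (psi p) (psi q) <-> XL_le p.1 q.1 /\ (p.2 ==> q.2).
Proof.
case: p => Q b; case: q => Q' b' /=; split.
- move=> H; split.
  + move=> a Qa; have [z Hz] := fsurj (lexx a).
    have := H z; rewrite /= Hz; case: b H; case: b' => //= _; by apply.
  + case: b H => //; case: b' => // H.
    have [e He] := fsurj (le0x (\top : K)).
    have := H e; rewrite /= He /= => /(_ (pi_bot _)) /pi_top [].
- move=> [HQ Hb] x /=.
  case: b Hb; case: b' => //= _ Qx; apply: HQ => //.
  exact: pi_down (fle x) Qx.
Qed.

Lemma phi_le P P' : XL_le P P' <-> prod2_le (Y := XLspace K) (phi P) (phi P').
Proof.
rewrite /prod2_le /=.
have := psi_le (phi P) (phi P'); rewrite !psiK => H; exact: H.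
Qed.

Lemma phi_cont (U : XLspace K * bool -> Prop) : prod2_open U -> XL_open (fun P => U (phi P)).
Proof.
apply: gen_preimage; first exact: generated_top.
move=> V [[U0 [HU0 ->]]|[V0 ->]].
- move: HU0 => /= HU0.
  apply: (@gen_preimage (XL L) (XL K) _ (@XL_open d L) (fun P => (phi P).1) (generated_top _) _ U0 HU0).
  move=> W [a [->|->]]; have [z Hz] := fsurj (lexx a).
  + apply: gen_ext (_ : XL_open (fun P : XL L => ~ pr P z)) _.
    * by apply: gen_sub; exists z; left.
    * by move=> P /=; rewrite (phiQ_iff P Hz).
  + apply: gen_ext (_ : XL_open (fun P : XL L => pr P z)) _.
    * by apply: gen_sub; exists z; right.
    * by move=> P /=; rewrite (phiQ_iff P Hz).
- have [e He] := fsurj (le0x (\top : K)).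
  have Ee : forall P, phiB P = isb (pr P e).
    move=> P; case: (classic (pr P e)) => Pe.
    + by rewrite isb_true //; apply/(phiB_iff P He).
    + by rewrite isb_false //; apply/negbTE/negP => /(phiB_iff P He).
  have O1 : XL_open (fun P : XL L => pr P e) by apply: gen_sub; exists e; right.
  have O2 : XL_open (fun P : XL L => ~ pr P e) by apply: gen_sub; exists e; left.
  case: (classic (V0 true)) => Vt; case: (classic (V0 false)) => Vf.
  + apply: top_ext (generated_top _) (top_full (generated_top _)) _ => P; split=> // _ /=; by case: (phiB P).
  + apply: top_ext (generated_top _) O1 _ => P /=; rewrite Ee; split.
    * by move=> Pe; rewrite isb_true.
    * by case: (classic (pr P e)) => Pe //; rewrite isb_false.
  + apply: top_ext (generated_top _) O2 _ => P /=; rewrite Ee; split.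
    * by move=> Pe; rewrite isb_false.
    * by case: (classic (pr P e)) => Pe //; rewrite isb_true.
  + apply: top_ext (generated_top _) (top_empty (generated_top _)) _ => P /=; split=> //.
    by case: (phiB P).
Qed.

Lemma psi_cont (U : XL L -> Prop) : XL_open U -> prod2_open (fun p : XLspace K * bool => U (psi p)).
Proof.
apply: gen_preimage; first exact: generated_top.
move=> V [x [->|->]] /=.
- have O1 := @prod_piece (XLspace K) (fun Q : XL K => ~ pr Q (f x).1) true
     (gen_sub (ex_intro _ (f x).1 (or_introl erefl))).
  have O2 := @prod_piece (XLspace K) (fun Q : XL K => ~ pr Q (f x).2) false
     (gen_sub (ex_intro _ (f x).2 (or_introl erefl))).
  apply: top_ext (generated_top _) (top_union2 (generated_top _) O1 O2) _.
  move=> [Q b] /=; case: b; split=> //; by [case=> -[]|left|case=> -[]|right].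
- have O1 := @prod_piece (XLspace K) (fun Q : XL K => pr Q (f x).1) true
     (gen_sub (ex_intro _ (f x).1 (or_intror erefl))).
  have O2 := @prod_piece (XLspace K) (fun Q : XL K => pr Q (f x).2) false
     (gen_sub (ex_intro _ (f x).2 (or_intror erefl))).
  apply: top_ext (generated_top _) (top_union2 (generated_top _) O1 O2) _.
  move=> [Q b] /=; case: b; split=> //; by [case=> -[]|left|case=> -[]|right].
Qed.

Lemma dir1 : exists Y : PriestleySpace,
    order_homeomorphic (@XL_le d L) (@XL_open d L) (@prod2_le Y) (@prod2_open Y).
Proof.
exists (XLspace K), phi, psi; split.
- exact: psiK.
- exact: phiK.
- exact: phi_le.
- exact: phi_cont.
- exact: psi_cont.
Qed.
End Dir1.
Lemma classic_eqP (T : Type) : Equality.axiom (fun x y : T => isb (x = y)).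
Proof. by move=> x y; apply: (iffP idP) => /isbP. Qed.

Definition cfind (T : Type) (P : pred T) (n : nat) : option T :=
  match excluded_middle_informative (exists x, P x) with
  | left H => Some (proj1_sig (constructive_indefinite_description _ H))
  | right _ => None
  end.
Lemma cfind_correct (T : Type) (P : pred T) n x : cfind P n = Some x -> P x.
Proof.
rewrite /cfind; case: excluded_middle_informative => // H [<-].
exact: proj2_sig (constructive_indefinite_description _ H).
Qed.
Lemma cfind_complete (T : Type) (P : pred T) : (exists x, P x) -> exists n, cfind P n.
Proof. by move=> H; exists 0; rewrite /cfind; case: excluded_middle_informative. Qed.
Lemma cfind_ext (T : Type) (P Q : pred T) : P =1 Q -> cfind P =1 cfind Q.
Proof. by move=> H; have -> : P = Q by apply: functional_extensionality. Qed.

Definition cdpred (Y : PriestleySpace) (U : Y -> Prop) :=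
  clopen (@ps_open Y) U /\ down_set (@ps_le Y) U.
Definition CD (Y : PriestleySpace) := {U : Y -> Prop | cdpred U}.

HB.instance Definition _ (Y : PriestleySpace) := hasDecEq.Build (CD Y) (@classic_eqP (CD Y)).
HB.instance Definition _ (Y : PriestleySpace) :=
  hasChoice.Build (CD Y) (@cfind_correct (CD Y)) (@cfind_complete (CD Y)) (@cfind_ext (CD Y)).

Section CDlat.
Variable Y : PriestleySpace.
Local Notation T := (CD Y).
Let top := ps_top Y.

Lemma CD_ext (x y : T) : (forall a, proj1_sig x a <-> proj1_sig y a) -> x = y.
Proof.
case: x => p hp; case: y => q hq /= H.
have E : p = q by apply: pred_ext.
subst q; congr exist; exact: proof_irrelevance.
Qed.

Lemma cd_meet_pf (x y : T) : cdpred (fun a => proj1_sig x a /\ proj1_sig y a).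
Proof.
case: x => p [[po pc] pd]; case: y => q [[qo qc] qd] /=.
split; first split.
- exact: top_inter.
- apply: top_ext top (top_union2 top pc qc) _ => a; split.
  + by case=> H [H1 H2]; apply: H.
  + by move=> H; apply: NNPP => H'; apply: H; split; apply: NNPP => H2; apply: H'; [left|right].
- by move=> a b ba [Ha Hb]; split; [apply: pd ba Ha|apply: qd ba Hb].
Qed.

Lemma cd_join_pf (x y : T) : cdpred (fun a => proj1_sig x a \/ proj1_sig y a).
Proof.
case: x => p [[po pc] pd]; case: y => q [[qo qc] qd] /=.
split; first split.
- exact: top_union2.
- apply: top_ext top (top_inter top pc qc) _ => a; split.
  + by case=> H1 H2 [H|H]; [apply: H1|apply: H2].
  + by move=> H; split=> H'; apply: H; [left|right].
- by move=> a b ba [Ha|Hb]; [left; apply: pd ba Ha|right; apply: qd ba Hb].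
Qed.

Lemma cd_bot_pf : cdpred (fun _ : Y => False).
Proof.
split; first split.
- exact: top_empty.
- by apply: top_ext top (top_full top) _ => a; split=> // _ [].
- by [].
Qed.

Lemma cd_top_pf : cdpred (fun _ : Y => True).
Proof.
split; first split.
- exact: top_full.
- by apply: top_ext top (top_empty top) _ => a; split=> // H; apply: H.
- by [].
Qed.

Definition cd_meet (x y : T) : T := exist _ _ (cd_meet_pf x y).
Definition cd_join (x y : T) : T := exist _ _ (cd_join_pf x y).
Definition cd_bot : T := exist _ _ cd_bot_pf.
Definition cd_top : T := exist _ _ cd_top_pf.
Definition cd_le (x y : T) : bool := isb (forall a, proj1_sig x a -> proj1_sig y a).
Definition cd_lt (x y : T) : bool := (y != x) && cd_le x y.

Lemma cd_le_def x y : cd_le x y = (cd_meet x y == x).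
Proof.
apply/idP/idP.
- move/isbP => H; apply/isbP; apply: CD_ext => a /=; split; first by case.
  by move=> Ha; split=> //; apply: H.
- by move/isbP => <-; apply/isbP => a /= [].
Qed.
Lemma cd_lt_def x y : cd_lt x y = (y != x) && cd_le x y. Proof. by []. Qed.
Lemma cd_meetC : commutative cd_meet.
Proof. by move=> x y; apply: CD_ext => a /=; split=> -[]. Qed.
Lemma cd_joinC : commutative cd_join.
Proof. by move=> x y; apply: CD_ext => a /=; split=> -[]; by [left|right]. Qed.
Lemma cd_meetA : associative cd_meet.
Proof. by move=> x y z; apply: CD_ext => a /=; split=> [[? [? ?]]|[[? ?] ?]]. Qed.
Lemma cd_joinA : associative cd_join.
Proof. by move=> x y z; apply: CD_ext => a /=; tauto. Qed.
Lemma cd_joinKI y x : cd_meet x (cd_join x y) = x.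
Proof. by apply: CD_ext => a /=; tauto. Qed.
Lemma cd_meetKU y x : cd_join x (cd_meet x y) = x.
Proof. by apply: CD_ext => a /=; tauto. Qed.
Lemma cd_meetUl : left_distributive cd_meet cd_join.
Proof. by move=> x y z; apply: CD_ext => a /=; tauto. Qed.
Lemma cd_meetxx : idempotent_op cd_meet.
Proof. by move=> x; apply: CD_ext => a /=; tauto. Qed.
End CDlat.

Fact cd_display : Order.disp_t. Proof. exact: Order.Disp tt tt. Qed.

HB.instance Definition _ (Y : PriestleySpace) :=
  Order.isMeetJoinDistrLattice.Build cd_display (CD Y) (@cd_le_def Y) (@cd_lt_def Y)
    (@cd_meetC Y) (@cd_joinC Y) (@cd_meetA Y) (@cd_joinA Y) (@cd_joinKI Y) (@cd_meetKU Y)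
    (@cd_meetUl Y) (@cd_meetxx Y).

Lemma cd_le0x (Y : PriestleySpace) (x : CD Y) : (cd_bot Y <= x)%O.
Proof. by apply/isbP => a. Qed.
Lemma cd_lex1 (Y : PriestleySpace) (x : CD Y) : (x <= cd_top Y)%O.
Proof. by apply/isbP => a. Qed.

HB.instance Definition _ (Y : PriestleySpace) := Order.hasBottom.Build cd_display (CD Y) (@cd_le0x Y).
HB.instance Definition _ (Y : PriestleySpace) := Order.hasTop.Build cd_display (CD Y) (@cd_lex1 Y).

Check fun Y : PriestleySpace => (CD Y : tbDistrLatticeType cd_display).
Lemma CD_meetE (Y : PriestleySpace) (x y : CD Y) :
  proj1_sig (x `&` y) = (fun a => proj1_sig x a /\ proj1_sig y a).
Proof. by []. Qed.
Lemma CD_joinE (Y : PriestleySpace) (x y : CD Y) :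
  proj1_sig (x `|` y) = (fun a => proj1_sig x a \/ proj1_sig y a).
Proof. by []. Qed.
Lemma CD_botE (Y : PriestleySpace) : proj1_sig (\bot : CD Y) = (fun _ => False).
Proof. by []. Qed.
Lemma CD_topE (Y : PriestleySpace) : proj1_sig (\top : CD Y) = (fun _ => True).
Proof. by []. Qed.
Lemma CD_leE (Y : PriestleySpace) (x y : CD Y) :
  (x <= y)%O <-> forall a, proj1_sig x a -> proj1_sig y a.
Proof. exact: isbP. Qed.
Section Dual.
Context {d : Order.disp_t} (L : tbDistrLatticeType d).
Local Notation pr P := (proj1_sig P).

Lemma pit_le (x y : L) : ~ (x <= y) -> exists P : XL L, pr P y /\ ~ pr P x.
Proof.
move=> xy.
have HI : ideal (fun z : L => z <= y).
  split; [exact: le0x|by move=> a b ab hb; exact: le_trans ab hb|by move=> a b ha hb; rewrite leUx ha].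
have HF : lfilter (fun z : L => x <= z).
  split; [exact: lex1|by move=> a b ab xa; exact: le_trans xa ab|by move=> a b ha hb; rewrite lexI ha].
have [P [H1 H2]] := pit HI HF (fun z zy xz => xy (le_trans xz zy)).
by exists P; split; [apply: H1|move=> /H2; apply].
Qed.

Lemma sep_eq (x y : L) : (forall P : XL L, pr P x <-> pr P y) -> x = y.
Proof.
move=> H; apply/le_anti/andP; split; apply: NNPP => /pit_le [P [h1 h2]]; apply: h2; by apply/H.
Qed.

Lemma clopen_down_rep (D : XL L -> Prop) : clopen (@XL_open d L) D -> down_set (@XL_le d L) D ->
  exists x, forall P, D P <-> ~ pr P x.
Proof.
move=> [Do Dc] Dd.
have step1 : forall Q : XL L, ~ D Q -> exists a, pr Q a /\ forall P, D P -> ~ pr P a.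
  move=> Q DQ.
  pose F (U : XL L -> Prop) := U = (fun P => ~ D P) \/ exists a, pr Q a /\ U = (fun P => ~ pr P a).
  have Fo : forall U, F U -> XL_open U.
    by move=> U [->|[a [_ ->]]] //; apply: gen_sub; exists a; left.
  have Fc : forall P, exists U, F U /\ U P.
    move=> P; case: (classic (D P)) => DP; last by exists (fun P => ~ D P); split=> //; left.
    have [a [Qa Pa]] : exists a, pr Q a /\ ~ pr P a.
      apply: NNPP => H; apply: DQ; apply: Dd DP => a Qa; apply: NNPP => Pa; apply: H; by exists a.
    by exists (fun P => ~ pr P a); split=> //; right; exists a.
  have [s [sF scov]] := XL_compact Fo Fc.
  suff [a [Qa Ha]] : exists a, pr Q a /\ forall P, (exists U, List.In U s /\ U P) -> ~ D P \/ ~ pr P a.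
    exists a; split=> // P DP; by case: (Ha P (scov P)).
  elim: s sF {scov} => [|U s IH] sF.
    by exists \bot; split; [apply: pi_bot|move=> P [U []]].
  have [a [Qa Ha]] := IH (fun V Vs => sF V (or_intror Vs)).
  case: (sF U (or_introl erefl)) => [->|[b [Qb ->]]].
  - exists a; split=> // P [V [[<-|Vs] VP]]; [by left|apply: Ha; by exists V].
  - exists (a `|` b); split; first by rewrite pi_join.
    move=> P [V [[<-|Vs] VP]].
    + by right; rewrite pi_join => -[_ H]; apply: VP.
    + case: (Ha P (ex_intro _ V (conj Vs VP))) => [nD|na]; first by left.
      by right; rewrite pi_join => -[H _]; apply: na.
pose F (U : XL L -> Prop) := U = D \/ exists a, (forall P, D P -> ~ pr P a) /\ U = (fun P => pr P a).
have Fo : forall U, F U -> XL_open U.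
  by move=> U [->|[a [_ ->]]] //; apply: gen_sub; exists a; right.
have Fc : forall P, exists U, F U /\ U P.
  move=> P; case: (classic (D P)) => DP; first by exists D; split=> //; left.
  have [a [Pa Ha]] := step1 P DP.
  by exists (fun P => pr P a); split=> //; right; exists a.
have [s [sF scov]] := XL_compact Fo Fc.
suff [x [Hx Hc]] : exists x, (forall P, D P -> ~ pr P x) /\
    forall P, (exists U, List.In U s /\ U P) -> D P \/ pr P x.
  exists x => P; split; first exact: Hx.
  by move=> nx; case: (Hc P (scov P)).
elim: s sF {scov} => [|U s IH] sF.
  by exists \top; split; [move=> P _; apply: pi_top|move=> P [U []]].
have [x [Hx Hc]] := IH (fun V Vs => sF V (or_intror Vs)).
case: (sF U (or_introl erefl)) => [->|[a [Ha ->]]].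
- exists x; split=> // P [V [[<-|Vs] VP]]; [by left|apply: Hc; by exists V].
- exists (x `&` a); split.
  + by move=> P DP; rewrite pi_meet => -[]; [apply: Hx|apply: Ha].
  + move=> P [V [[<-|Vs] VP]].
    * by right; rewrite pi_meet; right.
    * case: (Hc P (ex_intro _ V (conj Vs VP))) => [DP|Px]; first by left.
      by right; rewrite pi_meet; left.
Qed.
End Dual.
Lemma slice_open (Y : PriestleySpace) (W : Y * bool -> Prop) (b : bool) :
  prod2_open W -> ps_open (fun y : Y => W (y, b)).
Proof.
apply: (@gen_preimage Y (Y * bool) _ (@ps_open Y) (fun y => (y, b)) (ps_top Y)).
move=> V [[U [HU ->]]|[V0 ->]] /=; first exact: HU.
case: (classic (V0 b)) => Vb.
- by apply: top_ext (ps_top Y) (top_full (ps_top Y)) _.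
- by apply: top_ext (ps_top Y) (top_empty (ps_top Y)) _.
Qed.

Section Dir2.
Context {d : Order.disp_t} (L : tbDistrLatticeType d) (hL : \bot != \top :> L)
  (Y : PriestleySpace) (h : XL L -> Y * bool) (h' : Y * bool -> XL L)
  (hK : cancel h h') (h'K : cancel h' h)
  (hle : forall x y, XL_le x y <-> prod2_le (h x) (h y))
  (hc1 : forall U, prod2_open U -> XL_open (fun x => U (h x)))
  (hc2 : forall U, XL_open U -> prod2_open (fun z => U (h' z))).
Local Notation pr P := (proj1_sig P).

Lemma h'le p q : XL_le (h' p) (h' q) <-> prod2_le p q.
Proof. by rewrite hle !h'K. Qed.

Let Yrefl (y : Y) : ps_le y y. Proof. by case: (ps_order Y). Qed.

Definition Wb (b : bool) (x : L) : Y -> Prop := fun y => ~ pr (h' (y, b)) x.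

Lemma Wb_cd b x : cdpred (Wb b x).
Proof.
split; first split.
- apply: (@slice_open Y (fun p => ~ pr (h' p) x) b); apply: (@hc2 (fun P : XL L => ~ pr P x)).
  by apply: gen_sub; exists x; left.
- apply: top_ext (ps_top Y) (@slice_open Y (fun p => pr (h' p) x) b _) _.
  + by apply: (@hc2 (fun P : XL L => pr P x)); apply: gen_sub; exists x; right.
  + by move=> y /=; split=> [H H'|/NNPP].
- move=> y y' y'y; rewrite /Wb => H H'; apply: H.
  have : XL_le (h' (y', b)) (h' (y, b)) by apply/h'le; split=> //; exact: implybb.
  by apply.
Qed.

Definition Fm (x : L) : CD Y * CD Y := (exist _ _ (Wb_cd true x), exist _ _ (Wb_cd false x)).

Lemma Fm_iso : iso_onto_Phi Fm.
Proof.
split; [|split; [|split; [|split; [|split; [|split]]]]].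
- move=> x x' E.
  have E1 : Wb true x = Wb true x' by have := congr1 (fun p => proj1_sig p.1) E.
  have E2 : Wb false x = Wb false x' by have := congr1 (fun p => proj1_sig p.2) E.
  apply: sep_eq => P; rewrite -(hK P); case: (h P) => y b.
  have E3 : Wb b x y <-> Wb b x' y by case: b; [rewrite E1|rewrite E2].
  by split=> H; apply: NNPP => H'; [exact: (proj2 E3) H' H|exact: (proj1 E3) H' H].
- move=> x; apply/CD_leE => y /=; rewrite /Wb => H H'; apply: H.
  have : XL_le (h' (y, false)) (h' (y, true)) by apply/h'le; split.
  by apply.
- move=> A B /CD_leE AB.
  pose W (p : Y * bool) := if p.2 then proj1_sig A p.1 else proj1_sig B p.1.
  case: (proj2_sig A) => [[Ao Ac] Ad]; case: (proj2_sig B) => [[Bo Bc] Bd].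
  have Wo : prod2_open W.
    apply: top_ext (generated_top _) (top_union2 (generated_top _) (prod_piece true Ao) (prod_piece false Bo)) _.
    by move=> [y [|]]; rewrite /W /=; split=> //; [case=> -[]|left|case=> -[]|right].
  have Wc : prod2_open (fun p => ~ W p).
    apply: top_ext (generated_top _) (top_union2 (generated_top _) (prod_piece true Ac) (prod_piece false Bc)) _.
    by move=> [y [|]]; rewrite /W /=; split=> //; [case=> -[]|left|case=> -[]|right].
  have [x Hx] : exists x, forall P, W (h P) <-> ~ pr P x.
    apply: clopen_down_rep; first by split; [apply: hc1 Wo|apply: hc1 Wc].
    move=> P P' /hle; rewrite /W.
    case: (h P) => y b; case: (h P') => y' b' [/= yy bb].
    by case: b bb; case: b' => //= _; [exact: Ad yy|move=> /AB; exact: Bd yy|exact: Bd yy].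
  exists x; congr pair; apply: CD_ext => y /=; rewrite /Wb -Hx h'K //.
- move=> x x'; congr pair; apply: CD_ext => y /=; rewrite /Wb pi_meet;
    (split; [by move=> H; split=> H'; apply: H; [left|right]|by move=> [H1 H2] []]).
- move=> x x'; congr pair; apply: CD_ext => y /=; rewrite /Wb pi_join;
    (split; [by move=> H; apply: NNPP => H'; apply: H; split; apply: NNPP => H2; apply: H'; [left|right]|by move=> [H1|H2] []]).
- by congr pair; apply: CD_ext => y /=; split=> // H; apply: H; apply: pi_bot.
- by congr pair; apply: CD_ext => y /=; split=> // _; apply: pi_top.
Qed.

Lemma dir2 : isomorphic_to_some_Phi L.
Proof.
exists cd_display, (CD Y); split; last by exists Fm; exact: Fm_iso.
apply/negP => /eqP E.
have [P [Pb _]] : exists P : XL L, pr P \bot /\ ~ pr P \top.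
  apply: pit_le => H; move: hL; suff -> : (\bot : L) = \top by rewrite eqxx.
  by apply/le_anti; rewrite H le0x.
have := congr1 (fun U : CD Y => proj1_sig U (h P).1) E => /=.
by move=> ->.
Qed.
End Dir2.

Unset Implicit Arguments.
Theorem mainTheorem6 (d : Order.disp_t) (L : tbDistrLatticeType d)
  (hL : \bot != \top :> L) :
  isomorphic_to_some_Phi L <->
  exists Y : PriestleySpace,
    order_homeomorphic (@XL_le d L) (@XL_open d L) (@prod2_le Y) (@prod2_open Y).
Proof.
split.
- move=> [d' [K [_ [f Hf]]]]; exact: dir1 Hf.
- move=> [Y [h [h' [hK h'K hle hc1 hc2]]]]; exact: (dir2 hL hK h'K hle hc1 hc2).
Qed.
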